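(* Let $\mathcal{H}_S$ (system) and $\mathcal{H}_B$ (bath) be Hilbert spaces (with all traces below finite, e.g. finite-dimensional). Let $H_S(s)$, $s\in[0,t]$, be a (possibly time-dependent) self-adjoint system Hamiltonian, $H_B$ a time-independent self-adjoint bath Hamiltonian, and $U_t$ any unitary on $\mathcal{H}_S\otimes\mathcal{H}_B$. Fix $\beta>0$ and set $Z_S(s)={\rm Tr}[e^{-\beta H_S(s)}]$, $\tau_S(s)=e^{-\beta H_S(s)}/Z_S(s)$, $Z_B={\rm Tr}[e^{-\beta H_B}]$, $\tau_B=e^{-\beta H_B}/Z_B$, $F_S(s)=-\beta^{-1}\ln Z_S(s)$, $\Delta F_S=F_S(t)-F_S(0)$. Let $\{|\epsilon\rangle\}$ be an orthonormal eigenbasis of $H_S(0)$ with eigenvalues $\epsilon$. Define $\Phi_t(\rho)={\rm Tr}_B[U_t(\rho\otimes\tau_B)U_t^\dagger]$, $\tilde Z_S(t)=\sum_\epsilon e^{-\beta{\rm Tr}[H_S(t)\Phi_t(|\epsilon\rangle\langle\epsilon|)]}$, $$\Theta_{SB}(t)=\sum_\epsilon \frac{e^{-\beta{\rm Tr}[H_S(t)\Phi_t(|\epsilon\rangle\langle\epsilon|)]}}{\tilde Z_S(t)}\,U_t(|\epsilon\rangle\langle\epsilon|\otimes\tau_B)U_t^\dagger,\qquad \tilde\rho_S(t)={\rm Tr}_B[\Theta_{SB}(t)],$$ the guessed quantum heat $\langle\tilde Q\rangle_B={\rm Tr}[H_B\tau_B]-{\rm Tr}[(\mathbb{1}_S\otimes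 H_B)\Theta_{SB}(t)]$, the average internal energy change $\langle\Delta E\rangle={\rm Tr}[H_S(t)\Phi_t(\tau_S(0))]-{\rm Tr}[H_S(0)\tau_S(0)]$, and the average guessed quantum work $\langle\tilde W\rangle=\langle\Delta E\rangle-\langle\tilde Q\rangle_B$. Then $$\langle\tilde W\rangle\ \ge\ \Delta F_S+\beta^{-1}D[\tilde\rho_S(t)\|\tau_S(t)],$$ where $D[\rho\|\sigma]={\rm Tr}[\rho\ln\rho]-{\rm Tr}[\rho\ln\sigma]$ is the quantum relative entropy.
   Context: $\langle\Delta E\rangle$ equals the average of $\Delta\tilde E(\epsilon)={\rm Tr}[H_S(t)\Phi_t(|\epsilon\rangle\langle\epsilon|)]-\epsilon$ with weights $e^{-\beta\epsilon}/Z_S(0)$. $\Theta_{SB}(t)$ is called the best possible guessed state and $\tilde\rho_S(t)$ its reduced system state. *)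

(* Defs.v *)
(* complex matrices over C := R[i] (R : realType),
   finite-dimensional Hilbert spaces C^n (system) and C^m (bath). *)
From HB Require Import structures.
From mathcomp Require Import all_boot all_order all_algebra.
From mathcomp Require Import sesquilinear spectral.
From mathcomp Require Import complex mxtens.
From mathcomp Require Import boolp reals sequences exp.

Set Implicit Arguments.
Unset Strict Implicit.
Unset Printing Implicit Defensive.

Import GRing.Theory Num.Theory.
Local Open Scope ring_scope.
Local Open Scope sesquilinear_scope.

Section QDefs.
Context {R : realType}.
Local Notation C := (complex R).

Definition rC (x : R) : C := Complex x 0.

Definition selfadjmx {n} (A : 'M[C]_n) : bool := A ^t* == A.

(* real part of the trace (all traces used below are traces of products
   of self-adjoint operators, hence real) *)
Definition rtr {n} (A : 'M[C]_n) : R := complex.Re (\tr A).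

(* Functional calculus for self-adjoint matrices: if A = U^* diag(d) U with
   U unitary and d real, then f(A) := U^* diag(f d) U.  (The value does not
   depend on the chosen spectral decomposition.)  Returns 0 if A has no such
   decomposition, i.e. is not self-adjoint. *)
Definition mfun {n} (f : R -> R) (A : 'M[C]_n) : 'M[C]_n :=
  match pselect (exists p : 'M[C]_n * 'rV[R]_n,
          p.1 \is unitarymx /\
          A = p.1 ^t* *m diag_mx (map_mx rC p.2) *m p.1) with
  | left h => let p := projT1 (cid h) in
              p.1 ^t* *m diag_mx (map_mx (fun x => rC (f x)) p.2) *m p.1
  | right _ => 0
  end.

Definition expmx {n} (beta : R) (H : 'M[C]_n) : 'M[C]_n :=
  mfun (fun x => expR (- beta * x)) H.

Definition partfun {n} (beta : R) (H : 'M[C]_n) : R := rtr (expmx beta H).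

Definition gibbs {n} (beta : R) (H : 'M[C]_n) : 'M[C]_n :=
  rC (partfun beta H)^-1 *: expmx beta H.

Definition free_energy {n} (beta : R) (H : 'M[C]_n) : R :=
  - beta^-1 * ln (partfun beta H).

(* partial trace over the bath (second tensor factor, convention of tensmx) *)
Definition ptraceB {n m} (X : 'M[C]_(n * m)) : 'M[C]_n :=
  \matrix_(i, j) \sum_(k < m) X (mxtens_index (i, k)) (mxtens_index (j, k)).

Definition channel {n m} (U : 'M[C]_(n * m)) (tauB : 'M[C]_m)
    (rho : 'M[C]_n) : 'M[C]_n :=
  ptraceB (U *m (rho *t tauB) *m U ^t*).

(* quantum relative entropy D[rho||sigma] = Tr[rho ln rho] - Tr[rho ln sigma]
   (ln via functional calculus; ln 0 = 0, i.e. the convention 0 ln 0 = 0) *)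
Definition relent {n} (rho sigma : 'M[C]_n) : R :=
  rtr (rho *m mfun (@ln R) rho) - rtr (rho *m mfun (@ln R) sigma).

Definition ketbra {n} (v : 'cV[C]_n) : 'M[C]_n := v *m v ^t*.

End QDefs.

(* Main.v *)
Require Import Defs.
From HB Require Import structures.
From mathcomp Require Import all_boot all_order all_algebra.
From mathcomp Require Import sesquilinear spectral.
From mathcomp Require Import complex mxtens.
From mathcomp Require Import boolp reals sequences exp.
From mathcomp Require Import ring lra.
Import GRing.Theory Num.Theory.
Local Open Scope ring_scope.
Local Open Scope sesquilinear_scope.
Set Implicit Arguments.
Unset Strict Implicit.

Module QLib.
Import Order.TTheory.
Section H.
Variable R : realType.
Local Notation C := (complex R).

Lemma rCE (x : R) : rC x = (x%:C)%C. Proof. by []. Qed.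
Lemma rCK (x : R) : complex.Re (rC x) = x. Proof. by []. Qed.
Lemma rCJ (x : R) : (rC x)^* = rC x.
Proof. by rewrite /rC; apply/eqP; rewrite eq_complex /= oppr0 !eqxx. Qed.
Lemma rCD (x y : R) : rC (x + y) = rC x + rC y.
Proof. by rewrite !rCE rmorphD. Qed.
Lemma rCM (x y : R) : rC (x * y) = rC x * rC y.
Proof. by rewrite !rCE rmorphM. Qed.
Lemma rCN (x : R) : rC (- x) = - rC x.
Proof. by rewrite !rCE rmorphN. Qed.
Lemma rCB (x y : R) : rC (x - y) = rC x - rC y.
Proof. by rewrite !rCE rmorphB. Qed.
Lemma rC0 : rC 0 = 0 :> C. Proof. by []. Qed.
Lemma rC1 : rC 1 = 1 :> C. Proof. by []. Qed.
Lemma rC_sum I (r : seq I) (P : pred I) (F : I -> R) :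
  rC (\sum_(i <- r | P i) F i) = \sum_(i <- r | P i) rC (F i).
Proof. by rewrite rCE rmorph_sum. Qed.
Lemma rC_inj : injective (@rC R). Proof. by move=> x y []. Qed.
Lemma Re_sum I (r : seq I) (P : pred I) (F : I -> C) :
  complex.Re (\sum_(i <- r | P i) F i) = \sum_(i <- r | P i) complex.Re (F i).
Proof. by rewrite raddf_sum. Qed.
Lemma ReD (x y : C) : complex.Re (x + y) = complex.Re x + complex.Re y.
Proof. by rewrite raddfD. Qed.
Lemma Re_rCM (x : R) (z : C) : complex.Re (rC x * z) = x * complex.Re z.
Proof. by case: z => a b /=; rewrite mul0r subr0. Qed.

Lemma unitary_tK n (P : 'M[C]_n) : P \is unitarymx -> P^t* *m P = 1%:M.
Proof.
move=> Pu; rewrite -(invmx_unitary Pu) mulVmx; first by [].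
exact: unitarymx_unit.
Qed.
Lemma unitary_Kt n (P : 'M[C]_n) : P \is unitarymx -> P *m P^t* = 1%:M.
Proof. by move/unitarymxP. Qed.

Lemma map_rC_real n (d : 'rV[R]_n) : (map_mx rC d)^t* = (map_mx rC d)^T.
Proof. by apply/matrixP=> i j; rewrite !mxE rCJ. Qed.

Lemma mfun_uniq n (f : R -> R) (P Q : 'M[C]_n) (d e : 'rV[R]_n) :
  P \is unitarymx -> Q \is unitarymx ->
  Q^t* *m diag_mx (map_mx rC e) *m Q = P^t* *m diag_mx (map_mx rC d) *m P ->
  Q^t* *m diag_mx (map_mx (fun x => rC (f x)) e) *m Q =
  P^t* *m diag_mx (map_mx (fun x => rC (f x)) d) *m P.
Proof.
move=> Pu Qu eQP.
have QQ := unitary_Kt Qu; have PP := unitary_Kt Pu; have PP' := unitary_tK Pu.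
have Xu : Q *m P^t* \is unitarymx.
  by apply: mul_unitarymx; [exact: Qu | rewrite trmxC_unitary; exact: Pu].
have XP : Q *m P^t* *m P = Q by rewrite -mulmxA PP' mulmx1.
have key : diag_mx (map_mx rC e) *m (Q *m P^t*) = (Q *m P^t*) *m diag_mx (map_mx rC d).
  have -> : diag_mx (map_mx rC e) *m (Q *m P^t*) =
      Q *m (Q^t* *m diag_mx (map_mx rC e) *m Q) *m P^t*.
    by rewrite !mulmxA QQ mul1mx.
  by rewrite eQP !mulmxA -(mulmxA _ P) PP mulmx1.
move: (Q *m P^t*) Xu XP key => X Xu XP key.
have key2 : diag_mx (map_mx (fun x => rC (f x)) e) *m X =
            X *m diag_mx (map_mx (fun x => rC (f x)) d).
  apply/matrixP => i j; move/matrixP: key => /(_ i j).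
  rewrite !mul_diag_mx !mul_mx_diag !mxE.
  have [->|Xn0] := eqVneq (X i j) 0; first by rewrite !mulr0 !mul0r.
  move=> /eqP; rewrite [X i j * _]mulrC -subr_eq0 -mulrBl mulf_eq0 (negbTE Xn0) orbF.
  rewrite subr_eq0 => /eqP/rC_inj ->; by rewrite mulrC.
rewrite -XP trmx_mul map_mxM -!mulmxA (mulmxA (diag_mx _) X P) key2 !mulmxA.
rewrite -(mulmxA (P^t*) (X^t*) X) (unitary_tK Xu) mulmx1; reflexivity.
Qed.

Lemma mfun_spec n (f : R -> R) (A P : 'M[C]_n) (d : 'rV[R]_n) :
  P \is unitarymx -> A = P^t* *m diag_mx (map_mx rC d) *m P ->
  mfun f A = P^t* *m diag_mx (map_mx (fun x => rC (f x)) d) *m P.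
Proof.
move=> Pu eA; rewrite /mfun; case: pselect => [h|[]]; last by exists (P, d).
case: (cid h) => -[Q e] /= [Qu eA'].
apply: (mfun_uniq f Pu Qu); by rewrite -eA' -eA.
Qed.

Lemma selfadj_decomp n (A : 'M[C]_n) : selfadjmx A ->
  exists P : 'M[C]_n, exists d : 'rV[R]_n,
    P \is unitarymx /\ A = P^t* *m diag_mx (map_mx rC d) *m P.
Proof.
move=> /eqP hA.
have hh : A \is hermsymmx by apply/is_hermitianmxP; rewrite expr0 scale1r hA.
have /orthomx_spectralP eA := hermitian_normalmx hh.
have /mxOverP re := hermitian_spectral_diag_real hh.
exists (spectralmx A), (map_mx (@complex.Re R) (spectral_diag A)).
split; first exact: spectral_unitarymx.
rewrite {1}eA (invmx_unitary (spectral_unitarymx A)).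
apply: (congr1 (fun D => (spectralmx A)^t* *m diag_mx D *m spectralmx A)).
apply/matrixP=> i j; rewrite !mxE; have := re i j; rewrite CrealE.
case: (spectral_diag A i j) => a b /= /eqP [] /eqP.
by rewrite eq_sym -addr_eq0 -mulr2n mulrn_eq0 /= => /eqP ->.
Qed.

Lemma sum_tens (V : nmodType) n m (F : 'I_(n * m) -> V) :
  \sum_(c < n * m) F c = \sum_(i < n) \sum_(j < m) F (mxtens_index (i, j)).
Proof.
rewrite pair_big /=; apply: reindex => /=.
by exists (@mxtens_unindex n m) => c _; rewrite -?surjective_pairing (mxtens_indexK, mxtens_unindexK).
Qed.

Lemma mxtens_index_eq n m (p q : 'I_n * 'I_m) :
  (mxtens_index p == mxtens_index q) = (p == q).
Proof. exact: (can_eq (@mxtens_indexK n m)). Qed.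

Lemma trmxC_tens n m p q (A : 'M[C]_(n, m)) (B : 'M[C]_(p, q)) :
  (A *t B)^t* = A^t* *t B^t*.
Proof. by rewrite trmx_tens map_mxT. Qed.

Lemma tens1mx n m : (1%:M : 'M[C]_n) *t (1%:M : 'M[C]_m) = 1%:M.
Proof.
apply/matrixP => c c'; case: (mxtens_indexP c) => i j; case: (mxtens_indexP c') => k l.
rewrite tensmxE !mxE mxtens_index_eq xpair_eqE.
by case: (i == k); case: (j == l); rewrite /= ?mulr1n ?mulr0n ?mulr1 ?mulr0.
Qed.

Lemma unitary_tens n m (A : 'M[C]_n) (B : 'M[C]_m) :
  A \is unitarymx -> B \is unitarymx -> A *t B \is unitarymx.
Proof.
move=> /unitarymxP hA /unitarymxP hB; apply/unitarymxP.
by rewrite trmxC_tens tensmx_mul hA hB tens1mx.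
Qed.

Lemma tens_suml n m p q I (r : seq I) (P : pred I) (c : I -> C)
  (X : I -> 'M[C]_(n, m)) (T : 'M[C]_(p, q)) :
  (\sum_(k <- r | P k) c k *: X k) *t T = \sum_(k <- r | P k) c k *: (X k *t T).
Proof.
apply/matrixP => i j; rewrite !mxE !summxE mulr_suml.
by apply: eq_bigr => k _; rewrite !mxE mulrA.
Qed.

Lemma diag_tens n m (d : 'rV[C]_n) (e : 'rV[C]_m) :
  diag_mx d *t diag_mx e =
  diag_mx (\row_c (d 0 (@mxtens_unindex _ _ c).1 * e 0 (@mxtens_unindex _ _ c).2)).
Proof.
apply/matrixP => c c'; case: (mxtens_indexP c) => i j; case: (mxtens_indexP c') => k l.
rewrite tensmxE !mxE mxtens_index_eq xpair_eqE mxtens_indexK /=.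
by case: (i == k); case: (j == l); rewrite /= ?mulr1n ?mulr0n ?mulr0 ?mul0r.
Qed.

Lemma ptraceB_sum n m I (r : seq I) (P : pred I) (c : I -> C)
  (X : I -> 'M[C]_(n * m)) :
  ptraceB (\sum_(k <- r | P k) c k *: X k) = \sum_(k <- r | P k) c k *: ptraceB (X k).
Proof.
apply/matrixP => i j; rewrite !mxE !summxE.
under eq_bigr => k _ do rewrite summxE.
rewrite exchange_big /=; apply: eq_bigr => k _; rewrite !mxE mulr_sumr.
by apply: eq_bigr => l _; rewrite !mxE.
Qed.

Lemma ptraceB_adj n m (Z : 'M[C]_(n * m)) : ptraceB (Z^t*) = (ptraceB Z)^t*.
Proof.
apply/matrixP => i j; rewrite !mxE rmorph_sum; apply: eq_bigr => k _.
by rewrite !mxE.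
Qed.

Lemma sum_delta n (F : 'I_n -> C) (q : 'I_n) :
  \sum_(l < n) F l * (1%:M : 'M[C]_n) q l = F q.
Proof.
rewrite (bigD1 q) //= big1 ?addr0; first by rewrite mxE eqxx mulr1.
by move=> l /negPf; rewrite mxE eq_sym => ->; rewrite mulr0.
Qed.

Lemma reorder5 (T1 T2 T3 T4 T5 : finType) (F : T1 -> T2 -> T3 -> T4 -> T5 -> C) :
  \sum_k \sum_p \sum_q \sum_i \sum_l F k p q i l =
  \sum_p \sum_q \sum_i \sum_l \sum_k F k p q i l.
Proof.
rewrite exchange_big; apply: eq_bigr => p _.
rewrite exchange_big; apply: eq_bigr => q _.
rewrite exchange_big; apply: eq_bigr => i _.
by rewrite exchange_big.
Qed.

Lemma ptraceB_mul n m (A A' : 'M[C]_n) (B B' : 'M[C]_m) (Z : 'M[C]_(n * m)) :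
  B' *m B = 1%:M ->
  ptraceB ((A *t B) *m Z *m (A' *t B')) = A *m ptraceB Z *m A'.
Proof.
move=> hB; apply/matrixP => i j; rewrite !mxE.
under eq_bigr => k _ do rewrite mxE sum_tens.
under eq_bigr => k _ do under eq_bigr => p _ do under eq_bigr => q _ do
  rewrite tensmxE mxE sum_tens mulr_suml.
under eq_bigr => k _ do under eq_bigr => p _ do under eq_bigr => q _ do
  under eq_bigr => i0 _ do rewrite mulr_suml.
under eq_bigr => k _ do under eq_bigr => p _ do under eq_bigr => q _ do
  under eq_bigr => i0 _ do under eq_bigr => l _ do rewrite tensmxE.
rewrite reorder5; apply: eq_bigr => p _.
have E : forall q i0 l, \sum_k A i i0 * B k l *
      Z (mxtens_index (i0, l)) (mxtens_index (p, q)) * (A' p j * B' q k) =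
    (A i i0 * Z (mxtens_index (i0, l)) (mxtens_index (p, q)) * A' p j) *
      (B' *m B) q l.
  by move=> q i0 l; rewrite [in RHS]mxE mulr_sumr; apply: eq_bigr => k _; ring.
under eq_bigr => q _ do under eq_bigr => i0 _ do
  under eq_bigr => l _ do rewrite E hB.
under eq_bigr => q _ do under eq_bigr => i0 _ do rewrite sum_delta.
rewrite exchange_big mxE mulr_suml; apply: eq_bigr => i0 _.
rewrite mxE mulr_sumr mulr_suml; apply: eq_bigr => q _; ring.
Qed.


Lemma diag_mapE n (d : 'rV[R]_n) (f : R -> R) (a : R) (g : R -> R) :
  (forall x, g x = a * f x) ->
  diag_mx (map_mx (fun x => rC (g x)) d) = rC a *: diag_mx (map_mx (fun x => rC (f x)) d).
Proof.
move=> hg; apply/matrixP => i j; rewrite !mxE hg rCM.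
by case: (i == j); rewrite ?mulr1n ?mulr0n ?mulr0.
Qed.

Lemma tr_conj n (P D : 'M[C]_n) : P \is unitarymx -> \tr (P^t* *m D *m P) = \tr D.
Proof. by move=> Pu; rewrite mxtrace_mulC mulmxA (unitary_Kt Pu) mul1mx. Qed.

Lemma rtr_diag n (P : 'M[C]_n) (d : 'rV[R]_n) (f : R -> R) : P \is unitarymx ->
  rtr (P^t* *m diag_mx (map_mx (fun x => rC (f x)) d) *m P) = \sum_i f (d 0 i).
Proof.
move=> Pu; rewrite /rtr (tr_conj _ Pu) mxtrace_diag Re_sum.
by apply: eq_bigr => i _; rewrite mxE.
Qed.

Lemma expR_pos_sum n (d : 'I_n -> R) (b : R) : (0 < n)%N -> 0 < \sum_i expR (- b * d i).
Proof.
case: n d => // n d _; rewrite big_ord_recl; apply: ltr_wpDr; last exact: expR_gt0.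
by apply: sumr_ge0 => i _; exact/ltW/expR_gt0.
Qed.

Lemma gibbs_spec n (beta : R) (A P : 'M[C]_n) (d : 'rV[R]_n) :
  P \is unitarymx -> A = P^t* *m diag_mx (map_mx rC d) *m P ->
  partfun beta A = \sum_i expR (- beta * d 0 i) /\
  gibbs beta A = P^t* *m diag_mx (map_mx (fun x => rC (expR (- beta * x) /
     \sum_i expR (- beta * d 0 i))) d) *m P.
Proof.
move=> Pu eA.
have eE : expmx beta A = P^t* *m diag_mx (map_mx (fun x => rC (expR (- beta * x))) d) *m P.
  exact: mfun_spec.
have eZ : partfun beta A = \sum_i expR (- beta * d 0 i).
  by rewrite /partfun eE rtr_diag.
split; first exact: eZ.
rewrite /gibbs eE eZ.
rewrite [in RHS](@diag_mapE _ _ (fun x => expR (- beta * x)) (\sum_i expR (- beta * d 0 i))^-1).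
  rewrite scalemxAl scalemxAr; reflexivity.
by move=> x; rewrite mulrC.
Qed.

Lemma eig_decomp n (A V : 'M[C]_n) (e : 'I_n -> R) :
  V \is unitarymx -> (forall k, A *m col k V = rC (e k) *: col k V) ->
  A = (V^t*)^t* *m diag_mx (map_mx rC (\row_k e k)) *m V^t*.
Proof.
move=> Vu hA; rewrite trmxCK.
have : A *m V = V *m diag_mx (map_mx rC (\row_k e k)).
  apply/matrixP => i j; move: (hA j) => /matrixP /(_ i 0).
  rewrite mul_mx_diag !mxE => hh; rewrite mulrC -hh; apply: eq_bigr => l _; rewrite !mxE.
  by [].
by move=> /(congr1 (mulmx^~ (V^t*))); rewrite (mulmxtVK _ Vu).
Qed.

Lemma proj_sum n (V : 'M[C]_n) (c : 'I_n -> C) :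
  \sum_k c k *: (col k V *m (col k V)^t*) = V *m diag_mx (\row_k c k) *m V^t*.
Proof.
apply/matrixP => i j; rewrite mul_mx_diag summxE !mxE; apply: eq_bigr => k _.
by rewrite !mxE big_ord1 !mxE mulrA [c k * _]mulrC.
Qed.

Lemma ln_ineq (x y : R) : 0 < x -> 0 < y -> x * ln y <= x * ln x + y - x.
Proof.
move=> x0 y0.
have h : ln y - ln x <= y / x - 1.
  rewrite -ln_div ?posrE //.
  have -> : y / x = 1 + (y / x - 1) by rewrite addrC subrK.
  have hh : -1 < y / x - 1 by have := divr_gt0 y0 x0; lra.
  by apply: (le_trans (le_ln1Dx hh)); lra.
have := ler_wpM2l (ltW x0) h.
rewrite mulrBr mulrBr mulr1 mulrCA divff ?gt_eqF // mulr1.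
by move=> hh; lra.
Qed.

Lemma term_le_sum (I : finType) (F : I -> R) (j : I) :
  (forall i, 0 <= F i) -> F j <= \sum_i F i.
Proof.
move=> h; rewrite (bigD1 j) //= lerDl; exact: sumr_ge0.
Qed.

Lemma sum_pos (n : nat) (F : 'I_n -> R) : (0 < n)%N -> (forall i, 0 < F i) -> 0 < \sum_i F i.
Proof.
case: n F => // n F _ h; apply: (lt_le_trans (h ord0)).
by apply: term_le_sum => i; exact: ltW.
Qed.

Lemma gibbs_ineq (I : finType) (p q : I -> R) :
  (forall i, 0 < p i) -> (forall i, 0 < q i) -> \sum_i p i = 1 -> \sum_i q i = 1 ->
  \sum_i p i * ln (q i) <= \sum_i p i * ln (p i).
Proof.
move=> hp hq sp sq.
have : \sum_i p i * ln (q i) <= \sum_i (p i * ln (p i) + q i - p i).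
  by apply: ler_sum => i _; exact: ln_ineq.
by rewrite sumrB big_split /= sp sq => hh; lra.
Qed.

Lemma ds_ineq (I J : finType) (M : I -> J -> R) (lam : J -> R) (s : I -> R) :
  (forall c a, 0 <= M c a) -> (forall c, \sum_a M c a = 1) ->
  (forall a, \sum_c M c a = 1) -> (forall a, 0 < lam a) -> (forall c, 0 < s c) ->
  \sum_c s c = 1 -> \sum_a lam a = 1 ->
  \sum_c (\sum_a M c a * lam a) * ln (s c) <= \sum_a lam a * ln (lam a).
Proof.
move=> hM hr hc hl hs ss sl.
have e1 : \sum_c (\sum_a M c a * lam a) * ln (s c) =
          \sum_c \sum_a M c a * (lam a * ln (s c)).
  by apply: eq_bigr => c _; rewrite mulr_suml; apply: eq_bigr => a _; rewrite mulrA.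
have e2 : \sum_c \sum_a M c a * (lam a * ln (lam a) + s c - lam a) =
   \sum_a lam a * ln (lam a) + \sum_c s c - \sum_a lam a.
  transitivity (\sum_c \sum_a (M c a * (lam a * ln (lam a)) + M c a * s c - M c a * lam a)).
    by apply: eq_bigr => c _; apply: eq_bigr => a _; ring.
  under eq_bigr => c _ do rewrite sumrB big_split /=.
  rewrite sumrB big_split /=.
  congr (_ + _ - _).
  - rewrite exchange_big; apply: eq_bigr => a _; rewrite -mulr_suml hc mul1r //.
  - by apply: eq_bigr => c _; rewrite -mulr_suml hr mul1r.
  - by rewrite exchange_big; apply: eq_bigr => a _; rewrite -mulr_suml hc mul1r.
have : \sum_c \sum_a M c a * (lam a * ln (s c)) <=
       \sum_c \sum_a M c a * (lam a * ln (lam a) + s c - lam a).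
  apply: ler_sum => c _; apply: ler_sum => a _; apply: ler_wpM2l => //.
  exact: ln_ineq.
by rewrite e1 e2 ss sl => hh; lra.
Qed.

Definition dgm n (f : 'I_n -> R) : 'M[C]_n := diag_mx (\row_i rC (f i)).
Arguments dgm {n}.

Lemma dgm_map n (d : 'rV[R]_n) (g : R -> R) :
  diag_mx (map_mx (fun x => rC (g x)) d) = dgm (fun i => g (d 0 i)).
Proof. by apply/matrixP => i j; rewrite !mxE. Qed.

Lemma dgm_map1 n (d : 'rV[R]_n) :
  diag_mx (map_mx rC d) = dgm (fun i => d 0 i).
Proof. by apply/matrixP => i j; rewrite !mxE. Qed.

Lemma dgm_ext n (f g : 'I_n -> R) : f =1 g -> dgm f = dgm g.
Proof. by move=> h; apply/matrixP => i j; rewrite !mxE h. Qed.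

Lemma dgm_mul n (f g : 'I_n -> R) : dgm f *m dgm g = dgm (fun i => f i * g i).
Proof. by rewrite /dgm mulmx_diag; apply/matrixP => i j; rewrite !mxE rCM. Qed.

Lemma dgm_adj n (f : 'I_n -> R) : (dgm f)^t* = dgm f.
Proof.
apply/matrixP => i j; rewrite !mxE [j == i]eq_sym.
by have [->|_] := eqVneq i j; rewrite ?eqxx ?mulr1n ?mulr0n ?rCJ ?rmorph0.
Qed.

Lemma rtr_dgm n (P : 'M[C]_n) (f : 'I_n -> R) : P \is unitarymx ->
  rtr (P^t* *m dgm f *m P) = \sum_i f i.
Proof.
move=> Pu; rewrite /rtr (tr_conj _ Pu) mxtrace_diag Re_sum.
by apply: eq_bigr => i _; rewrite mxE.
Qed.

Lemma conj_sum n p I (r : seq I) (Pr : pred I) (c : I -> C)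
  (A : 'M[C]_(p, n)) (Y : I -> 'M[C]_n) (B : 'M[C]_(n, p)) :
  A *m (\sum_(k <- r | Pr k) c k *: Y k) *m B = \sum_(k <- r | Pr k) c k *: (A *m Y k *m B).
Proof.
rewrite mulmx_sumr mulmx_suml; apply: eq_bigr => k _.
by rewrite -scalemxAr -scalemxAl.
Qed.

Lemma zzC (z : C) : z * z^* = rC (complex.Re (z * z^*)).
Proof.
case: z => a b; rewrite /rC; apply/eqP; rewrite eq_complex /=; apply/andP; split => //.
apply/eqP; ring.
Qed.

Lemma zzC_ge0 (z : C) : 0 <= complex.Re (z * z^*).
Proof. case: z => a b /=; rewrite mulrN opprK; apply: addr_ge0; exact: sqr_ge0. Qed.

Lemma zzC' (z : C) : z^* * z = rC (complex.Re (z * z^*)).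
Proof. by rewrite mulrC zzC. Qed.

Lemma conj_dgm_entry N (X : 'M[C]_N) (f : 'I_N -> R) c :
  (X *m dgm f *m X^t*) c c = rC (\sum_a complex.Re (X c a * (X c a)^*) * f a).
Proof.
rewrite mul_mx_diag !mxE rC_sum; apply: eq_bigr => a _.
rewrite !mxE rCM -zzC; ring.
Qed.

Lemma unitary_rows N (X : 'M[C]_N) c : X \is unitarymx ->
  \sum_a complex.Re (X c a * (X c a)^*) = 1.
Proof.
move=> /unitarymxP /matrixP /(_ c c); rewrite !mxE eqxx => h.
apply: rC_inj; rewrite rC_sum -[rC 1]h; apply: eq_bigr => a _; by rewrite -zzC [X^t* _ _]mxE mxE.
Qed.

Lemma unitary_cols N (X : 'M[C]_N) a : X \is unitarymx ->
  \sum_c complex.Re (X c a * (X c a)^*) = 1.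
Proof.
move=> /unitary_tK /matrixP /(_ a a); rewrite !mxE eqxx => h.
apply: rC_inj; rewrite rC_sum -[rC 1]h; apply: eq_bigr => c _; by rewrite -zzC' [X^t* _ _]mxE mxE.
Qed.

Lemma one_tens_diag n m (e : 'rV[C]_m) :
  (1%:M : 'M[C]_n) *t diag_mx e = diag_mx (\row_c e 0 (@mxtens_unindex _ _ c).2).
Proof.
rewrite -(diag_const_mx n (1 : C)) diag_tens; apply/matrixP => i j; rewrite !mxE.
by rewrite mul1r.
Qed.

Lemma tr_diag_mul N (d : 'rV[C]_N) (Z : 'M[C]_N) :
  \tr (diag_mx d *m Z) = \sum_c d 0 c * Z c c.
Proof. by rewrite mul_diag_mx /mxtrace; apply: eq_bigr => c _; rewrite mxE. Qed.

Lemma adj_mul p q k (A : 'M[C]_(p, q)) (B : 'M[C]_(q, k)) : (A *m B)^t* = B^t* *m A^t*.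
Proof. by rewrite trmx_mul map_mxM. Qed.

Lemma rtrZ n (a : R) (M : 'M[C]_n) : rtr (rC a *: M) = a * rtr M.
Proof. by rewrite /rtr mxtraceZ Re_rCM. Qed.

Lemma rtrD n (A B : 'M[C]_n) : rtr (A + B) = rtr A + rtr B.
Proof. by rewrite /rtr mxtraceD raddfD. Qed.

Lemma rtrN n (A : 'M[C]_n) : rtr (- A) = - rtr A.
Proof. by rewrite /rtr raddfN raddfN. Qed.

Lemma rtrB n (A B : 'M[C]_n) : rtr (A - B) = rtr A - rtr B.
Proof. by rewrite rtrD rtrN. Qed.

Lemma rtr0 n : rtr (0 : 'M[C]_n) = 0.
Proof. by rewrite /rtr mxtrace0. Qed.

Lemma rtr_sum n k (A : 'I_k -> 'M[C]_n) : rtr (\sum_i A i) = \sum_i rtr (A i).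
Proof.
elim/big_rec2: _ => [|i x y _ <-]; first exact: rtr0.
by rewrite rtrD.
Qed.

Lemma rtr_mulC n (A B : 'M[C]_n) : rtr (A *m B) = rtr (B *m A).
Proof. by rewrite /rtr mxtrace_mulC. Qed.

Lemma rtr_lin2 n k (c : 'I_k -> R) (A : 'I_k -> 'M[C]_n) (B : 'M[C]_n) :
  rtr (B *m \sum_i rC (c i) *: A i) = \sum_i c i * rtr (B *m A i).
Proof.
rewrite mulmx_sumr rtr_sum; apply: eq_bigr => i _.
by rewrite -scalemxAr rtrZ.
Qed.

Lemma rtr_lin n k (c : 'I_k -> R) (A : 'I_k -> 'M[C]_n) (B : 'M[C]_n) :
  rtr ((\sum_i rC (c i) *: A i) *m B) = \sum_i c i * rtr (B *m A i).
Proof. by rewrite rtr_mulC rtr_lin2. Qed.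

Lemma rtr_dgm' n (P : 'M[C]_n) (f : 'I_n -> R) : P \is unitarymx ->
  rtr (P *m dgm f *m P^t*) = \sum_i f i.
Proof.
move=> Pu; rewrite /rtr mxtrace_mulC mulmxA (unitary_tK Pu) mul1mx mxtrace_diag Re_sum.
by apply: eq_bigr => i _; rewrite mxE.
Qed.

Lemma lnQ (x Z : R) : 0 < Z -> ln (expR x / Z) = x - ln Z.
Proof. by move=> Z0; rewrite ln_div ?posrE ?expR_gt0 // expRK. Qed.

Lemma channel_lin n m k (U : 'M[C]_(n * m)) (T : 'M[C]_m) (c : 'I_k -> R)
  (X : 'I_k -> 'M[C]_n) :
  channel U T (\sum_i rC (c i) *: X i) = \sum_i rC (c i) *: channel U T (X i).
Proof. by rewrite /channel tens_suml conj_sum ptraceB_sum. Qed.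

Lemma rtr_scale_sub n (A B : 'M[C]_n) (a b : R) :
  rtr (A *m (rC a *: B - rC b *: 1%:M)) = a * rtr (A *m B) - b * rtr A.
Proof.
by rewrite mulmxBr -!scalemxAr mulmx1 rtrB !rtrZ.
Qed.

Lemma exists_pos (I : finType) (F : I -> R) : \sum_i F i = 1 -> exists i, 0 < F i.
Proof.
move=> h; case: (pselect (exists i, 0 < F i)) => // hn.
have : \sum_i F i <= 0.
  apply: sumr_le0 => i _; rewrite leNgt; apply/negP => hi; apply: hn; by exists i.
by rewrite h ler10.
Qed.

End H.
End QLib.

Import Order.TTheory GRing.Theory Num.Theory.
Import QLib.

Theorem corollary1 (R : realType) (n m : nat) (hn : (0 < n)%N) (hm : (0 < m)%N)
  (t beta : R) (ht : 0 <= t) (hbeta : 0 < beta)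
  (HS : R -> 'M[complex R]_n) (HB : 'M[complex R]_m)
  (U : 'M[complex R]_(n * m))
  (V : 'M[complex R]_n) (eps : 'I_n -> R) :
  (forall s, 0 <= s <= t -> selfadjmx (HS s)) ->
  selfadjmx HB ->
  U \is unitarymx ->
  V \is unitarymx ->
  (forall k : 'I_n, HS 0 *m col k V = rC (eps k) *: col k V) ->
  let tauB := gibbs beta HB in
  let Phi := channel U tauB in
  let proj := fun k : 'I_n => ketbra (col k V) in
  let Et := fun k : 'I_n => rtr (HS t *m Phi (proj k)) in
  let Ztil := \sum_(k < n) expR (- beta * Et k) in
  let Theta := \sum_(k < n)
      rC (expR (- beta * Et k) / Ztil) *: (U *m (proj k *t tauB) *m U ^t*) in
  let rhotil := ptraceB Theta in
  let Qtil := rtr (HB *m tauB) - rtr ((1%:M *t HB) *m Theta) in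
  let dE := rtr (HS t *m Phi (gibbs beta (HS 0))) - rtr (HS 0 *m gibbs beta (HS 0)) in
  let Wtil := dE - Qtil in
  let dF := free_energy beta (HS t) - free_energy beta (HS 0) in
  dF + beta^-1 * relent rhotil (gibbs beta (HS t)) <= Wtil.
Proof.
move=> hS hB Uu Vu hV; cbv zeta.
set tauB := gibbs beta HB.
set Phi := channel U tauB.
set proj := fun k : 'I_n => ketbra (col k V).
set Et := fun k : 'I_n => rtr (HS t *m Phi (proj k)).
set Ztil := \sum_(k < n) expR (- beta * Et k).
set Theta := \sum_(k < n) rC (expR (- beta * Et k) / Ztil) *: (U *m (proj k *t tauB) *m U ^t*).
set rhotil := ptraceB Theta.
have hSt : selfadjmx (HS t) by apply: hS; rewrite ht lexx.
have [Bm [b [Bu eHB]]] := selfadj_decomp hB.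
have [eZB etauB] := gibbs_spec beta Bu eHB.
move: eZB etauB; set ZB := \sum_i expR (- beta * b 0 i) => eZB etauB.
pose tt j := expR (- beta * b 0 j) / ZB.
have etau : tauB = Bm^t* *m dgm tt *m Bm.
  rewrite /tauB etauB dgm_map; reflexivity.
have eHB' : HB = Bm^t* *m dgm (fun j => b 0 j) *m Bm.
  rewrite {1}eHB dgm_map1; reflexivity.
have ZB0 : 0 < ZB by exact: expR_pos_sum.
have tt0 : forall j, 0 < tt j by move=> j; rewrite /tt divr_gt0 // expR_gt0.
have stt : \sum_j tt j = 1 by rewrite /tt -mulr_suml divff // gt_eqF.
have eHS0 := eig_decomp Vu hV.
have Vu' : V^t* \is unitarymx by rewrite trmxC_unitary; exact: Vu.
have [eZ0 eg0] := gibbs_spec beta Vu' eHS0.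
move: eZ0 eg0; rewrite trmxCK.
under eq_bigr => i _ do rewrite mxE.
set Z0 := \sum_i expR (- beta * eps i) => eZ0 eg0.
pose p k := expR (- beta * eps k) / Z0.
have eg0' : gibbs beta (HS 0) = V *m dgm p *m V^t*.
  rewrite eg0; apply: (congr1 (fun D => V *m D *m V^t*)).
  by apply/matrixP => i j; rewrite !mxE.
have eHS0' : HS 0 = V *m dgm eps *m V^t*.
  rewrite {1}eHS0 trmxCK; apply: (congr1 (fun D => V *m D *m V^t*)).
  by apply/matrixP => i j; rewrite !mxE.
have Z00 : 0 < Z0 by exact: expR_pos_sum.
have p0 : forall j, 0 < p j by move=> j; rewrite /p divr_gt0 // expR_gt0.
have sp : \sum_j p j = 1 by rewrite /p -mulr_suml divff // gt_eqF.
have [W [h [Wu eHSt]]] := selfadj_decomp hSt.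
have [eZt egt] := gibbs_spec beta Wu eHSt.
move: eZt egt; set Zt := \sum_i expR (- beta * h 0 i) => eZt egt.
pose g i := expR (- beta * h 0 i) / Zt.
have Zt0 : 0 < Zt by exact: expR_pos_sum.
have egt' : gibbs beta (HS t) = W^t* *m diag_mx (map_mx rC (\row_i g i)) *m W.
  rewrite egt; apply: (congr1 (fun D => W^t* *m D *m W)).
  by apply/matrixP => i j; rewrite !mxE.
have lnt : mfun (@ln R) (gibbs beta (HS t)) = rC (- beta) *: HS t - rC (ln Zt) *: 1%:M.
  rewrite (mfun_spec _ Wu egt') dgm_map.
  rewrite (dgm_ext (g := fun i => - beta * h 0 i + - ln Zt * 1)); last first.
    move=> i; rewrite mxE /g ln_div ?posrE ?expR_gt0 // expRK; ring.
  have -> : dgm (fun i => - beta * h 0 i + - ln Zt * 1) =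
      rC (- beta) *: dgm (fun i => h 0 i) - rC (ln Zt) *: 1%:M.
    apply/matrixP => i j; rewrite !mxE; case: (i == j); rewrite ?mulr1n ?mulr0n;
    by rewrite ?rCD ?rCM ?rCN ?mulr1 ?mulr0 ?oppr0 ?addr0 ?rC1 ?rC0 ?mulrN.
  rewrite mulmxBr mulmxBl -!scalemxAr -!scalemxAl mulmx1 (unitary_tK Wu).
  rewrite eHSt dgm_map1; reflexivity.
pose q k := expR (- beta * Et k) / Ztil.
have Ztil0 : 0 < Ztil by exact: expR_pos_sum.
have q0 : forall k, 0 < q k by move=> k; rewrite /q divr_gt0 // expR_gt0.
have sq : \sum_k q k = 1 by rewrite /q -mulr_suml divff // gt_eqF.
have eTh1 : Theta = U *m ((V *m dgm q *m V^t*) *t tauB) *m U^t*.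
  rewrite /dgm -proj_sum tens_suml conj_sum; reflexivity.
have Gu : U *m (V *t Bm^t*) \is unitarymx.
  apply: mul_unitarymx; first exact: Uu.
  by apply: unitary_tens; [exact: Vu | rewrite trmxC_unitary; exact: Bu].
pose lam (c : 'I_(n * m)) := q (@mxtens_unindex _ _ c).1 * tt (@mxtens_unindex _ _ c).2.
have eTh : Theta = (U *m (V *t Bm^t*)) *m dgm lam *m (U *m (V *t Bm^t*))^t*.
  rewrite eTh1 etau.
  have -> : (V *m dgm q *m V^t*) *t (Bm^t* *m dgm tt *m Bm) =
      (V *t Bm^t*) *m (dgm q *t dgm tt) *m (V^t* *t Bm).
    rewrite !tensmx_mul; reflexivity.
  have -> : dgm q *t dgm tt = dgm lam.
    rewrite /dgm diag_tens; apply: (congr1 diag_mx).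
    by apply/matrixP => i j; rewrite !mxE /lam rCM.
  rewrite adj_mul trmxC_tens trmxCK !mulmxA; reflexivity.
move: (U *m (V *t Bm^t*)) Gu eTh => G Gu eTh.
have lam0 : forall c, 0 < lam c by move=> c; rewrite /lam mulr_gt0.
have slam : \sum_c lam c = 1.
  rewrite sum_tens -sq; apply: eq_bigr => i _.
  rewrite -[q i]mulr1 -stt mulr_sumr; apply: eq_bigr => j _.
  by rewrite /lam mxtens_indexK.
have Th_sa : Theta^t* = Theta.
  rewrite eTh !adj_mul trmxCK dgm_adj !mulmxA; reflexivity.
have rho_sa : selfadjmx rhotil.
  by apply/eqP; rewrite /rhotil -ptraceB_adj Th_sa.
have [Y [r [Yu erho]]] := selfadj_decomp rho_sa.
have Fu : Y *t Bm \is unitarymx by apply: unitary_tens; [exact: Yu | exact: Bu].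
have eYrY : Y *m rhotil *m Y^t* = dgm (fun i => r 0 i).
  rewrite {1}erho !mulmxA (unitary_Kt Yu) mul1mx -mulmxA (unitary_Kt Yu) mulmx1 dgm_map1.
  reflexivity.
have ptr0 : ptraceB ((Y *t Bm) *m Theta *m (Y *t Bm)^t*) = dgm (fun i => r 0 i).
  rewrite trmxC_tens ptraceB_mul; first exact: eYrY.
  exact: (unitary_tK Bu).
have e1HB : 1%:M *t HB = (Y *t Bm)^t* *m dgm (fun c => b 0 (@mxtens_unindex _ _ c).2) *m (Y *t Bm).
  have -> : dgm (fun c => b 0 (@mxtens_unindex _ _ c).2) = (1%:M : 'M[complex R]_n) *t dgm (fun j => b 0 j).
    apply/matrixP => c c'; case: (mxtens_indexP c) => i j; case: (mxtens_indexP c') => k l.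
    rewrite tensmxE !mxE mxtens_index_eq xpair_eqE mxtens_indexK /=.
    by case: (i == k); case: (j == l); rewrite /= ?mulr1n ?mulr0n ?mulr0 ?mul0r ?mul1r.
  rewrite trmxC_tens !tensmx_mul mulmx1 (unitary_tK Yu) -eHB'; reflexivity.
move: (Y *t Bm) Fu ptr0 e1HB => F Fu ptr0 e1HB.
have Xu : F *m G \is unitarymx by apply: mul_unitarymx; [exact: Fu | exact: Gu].
have eFTF : F *m Theta *m F^t* = (F *m G) *m dgm lam *m (F *m G)^t*.
  rewrite eTh !adj_mul !mulmxA; reflexivity.
have ptr : ptraceB ((F *m G) *m dgm lam *m (F *m G)^t*) = dgm (fun i => r 0 i).
  by rewrite -eFTF.
move: (F *m G) Xu eFTF ptr => X Xu eFTF ptr.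
pose M c a := complex.Re (X c a * (X c a)^*).
pose w c := \sum_a M c a * lam a.
have er : forall i, r 0 i = \sum_l w (mxtens_index (i, l)).
  move=> i; move/matrixP: ptr => /(_ i i); rewrite !mxE eqxx mulr1n => hh.
  rewrite -[r 0 i]rCK -hh Re_sum; apply: eq_bigr => l _.
  by rewrite conj_dgm_entry rCK.
have M0 : forall c a, 0 <= M c a by move=> c a; exact: zzC_ge0.
have Mr : forall c, \sum_a M c a = 1 by move=> c; exact: unitary_rows.
have Mc : forall a, \sum_c M c a = 1 by move=> a; exact: unitary_cols.
have w0 : forall c, 0 < w c.
  move=> c; have [a0 ha0] := exists_pos (Mr c).
  apply: (lt_le_trans _ (term_le_sum a0 _)); first exact: mulr_gt0.
  by move=> a; apply: mulr_ge0; [exact: M0 | exact: ltW].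
have r0 : forall i, 0 < r 0 i by move=> i; rewrite er; apply: sum_pos.
have sw : \sum_c w c = 1.
  rewrite /w exchange_big -slam; apply: eq_bigr => a _.
  by rewrite -mulr_suml Mc mul1r.
have sr : \sum_i r 0 i = 1.
  by rewrite -sw sum_tens; apply: eq_bigr => i _; rewrite er.
have lnM' : forall x y : R, 0 < x -> 0 < y -> ln (x * y) = ln x + ln y.
  by move=> x y x0 y0; rewrite lnM ?posrE.
pose s c := r 0 (@mxtens_unindex _ _ c).1 * tt (@mxtens_unindex _ _ c).2.
have s0 : forall c, 0 < s c by move=> c; rewrite /s mulr_gt0.
have ss : \sum_c s c = 1.
  rewrite sum_tens -sr; apply: eq_bigr => i _.
  rewrite -[r 0 i]mulr1 -stt mulr_sumr; apply: eq_bigr => j _.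
  by rewrite /s mxtens_indexK.
have DS := ds_ineq M0 Mr Mc lam0 s0 ss slam.
set TK := \sum_c b 0 (@mxtens_unindex _ _ c).2 * w c.
set Srr := \sum_i r 0 i * ln (r 0 i).
have PA : \sum_c w c * ln (r 0 (@mxtens_unindex _ _ c).1) = Srr.
  rewrite sum_tens /Srr; apply: eq_bigr => i _.
  rewrite (_ : r 0 i * ln (r 0 i) = \sum_l w (mxtens_index (i, l)) * ln (r 0 i)).
    by apply: eq_bigr => l _; rewrite mxtens_indexK.
  by rewrite -mulr_suml -er.
have PB : \sum_c w c * (- beta * b 0 (@mxtens_unindex _ _ c).2 - ln ZB) = - beta * TK - ln ZB.
  rewrite (eq_bigr (fun c => - beta * (b 0 (@mxtens_unindex _ _ c).2 * w c) - ln ZB * w c)).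
    by rewrite sumrB -!mulr_sumr sw /TK mulr1.
  by move=> c _; ring.
have E1 : \sum_c w c * ln (s c) = Srr - beta * TK - ln ZB.
  transitivity (\sum_c (w c * ln (r 0 (@mxtens_unindex _ _ c).1) +
     w c * (- beta * b 0 (@mxtens_unindex _ _ c).2 - ln ZB))).
    apply: eq_bigr => c _.
    by rewrite /s (lnM' _ _ (r0 _) (tt0 _)) /tt (lnQ _ ZB0) mulrDr.
  by rewrite big_split /= PA PB; ring.
have gen : forall (I : finType) (x e : I -> R) (Z : R), 0 < Z -> \sum_i x i = 1 ->
    \sum_i x i * ln (expR (- beta * e i) / Z) = - beta * (\sum_i x i * e i) - ln Z.
  move=> I x e Z ZZ hx.
  rewrite (eq_bigr (fun i => - beta * (x i * e i) - ln Z * x i)).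
    by rewrite sumrB -!mulr_sumr hx mulr1.
  by move=> i _; rewrite lnQ //; ring.
set Sqq := \sum_k q k * ln (q k).
set Stt := \sum_j tt j * ln (tt j).
have E3 : \sum_a lam a * ln (lam a) = Sqq + Stt.
  rewrite sum_tens.
  transitivity (\sum_i \sum_j (q i * ln (q i) * tt j + q i * (tt j * ln (tt j)))).
    apply: eq_bigr => i _; apply: eq_bigr => j _.
    by rewrite /lam mxtens_indexK /= (lnM' _ _ (q0 _) (tt0 _)); ring.
  transitivity (\sum_i (q i * ln (q i) + q i * Stt)).
    apply: eq_bigr => i _; rewrite big_split /= -!mulr_sumr stt mulr1; reflexivity.
  by rewrite big_split /= -mulr_suml sq mul1r.
have E4 : Sqq = - beta * (\sum_k q k * Et k) - ln Ztil by exact: gen.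
have E5 : Stt = - beta * (\sum_j tt j * b 0 j) - ln ZB by exact: gen.
have E6 : \sum_k p k * ln (p k) = - beta * (\sum_k p k * eps k) - ln Z0 by exact: gen.
have E7 : \sum_k p k * ln (q k) = - beta * (\sum_k p k * Et k) - ln Ztil by exact: gen.
have GI := gibbs_ineq p0 q0 sp sq.
have cm : forall k (P A B : 'M[complex R]_k), P \is unitarymx ->
    (P^t* *m A *m P) *m (P^t* *m B *m P) = P^t* *m (A *m B) *m P.
  move=> k P A B Pu; rewrite !mulmxA -(mulmxA _ P (P^t*)) (unitary_Kt Pu) mulmx1 ?mulmxA.
  reflexivity.
have cm' : forall k (P A B : 'M[complex R]_k), P \is unitarymx ->
    (P *m A *m P^t*) *m (P *m B *m P^t*) = P *m (A *m B) *m P^t*.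
  move=> k P A B Pu; rewrite !mulmxA -(mulmxA _ (P^t*) P) (unitary_tK Pu) mulmx1 ?mulmxA.
  reflexivity.
have T1 : rtr (rhotil *m mfun (@ln R) rhotil) = Srr.
  rewrite (mfun_spec _ Yu erho) {1}erho (cm _ _ _ _ Yu) (dgm_map1 r) (dgm_map r (@ln R)) dgm_mul.
  by rewrite rtr_dgm.
have trr : rtr rhotil = 1 by rewrite erho dgm_map1 rtr_dgm.
have trH : rtr (rhotil *m HS t) = \sum_k q k * Et k.
  rewrite /rhotil /Theta ptraceB_sum rtr_lin; apply: eq_bigr => k _; reflexivity.
have T2 : rtr (rhotil *m mfun (@ln R) (gibbs beta (HS t))) =
    - beta * (\sum_k q k * Et k) - ln Zt * 1.
  by rewrite lnt rtr_scale_sub trH trr.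
have T3 : rtr (HS t *m Phi (gibbs beta (HS 0))) = \sum_k p k * Et k.
  rewrite eg0' /dgm -proj_sum /Phi channel_lin rtr_lin2; apply: eq_bigr => k _; reflexivity.
have T4 : rtr (HS 0 *m gibbs beta (HS 0)) = \sum_k p k * eps k.
  rewrite eg0' eHS0' (cm' _ _ _ _ Vu) dgm_mul rtr_dgm'; last exact: Vu.
  by apply: eq_bigr => k _; rewrite mulrC.
have T5 : rtr (HB *m tauB) = \sum_j tt j * b 0 j.
  rewrite etau eHB' (cm _ _ _ _ Bu) dgm_mul rtr_dgm; last exact: Bu.
  by apply: eq_bigr => k _; rewrite mulrC.
have T6 : rtr (1%:M *t HB *m Theta) = TK.
  rewrite e1HB -!mulmxA rtr_mulC !mulmxA.
  have -> : forall D : 'M[complex R]_(n * m), D *m F *m Theta *m F^t* = D *m (F *m Theta *m F^t*).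
    by move=> D; rewrite !mulmxA.
  rewrite eFTF /rtr /dgm tr_diag_mul Re_sum; apply: eq_bigr => c _.
  by rewrite conj_dgm_entry mxE -rCM rCK.
have DS' : Srr - beta * TK - ln ZB <= Sqq + Stt by rewrite -E1 -E3; exact: DS.
move: GI; rewrite E6 E7 => GI.
rewrite /free_energy eZt eZ0 /relent T1 T2 T3 T4 T5 T6.
set SqE := \sum_k q k * Et k.
set SpE := \sum_k p k * Et k.
set Spe := \sum_k p k * eps k.
set Sbt := \sum_j tt j * b 0 j.
have key : ln Z0 + Srr + beta * SqE <= beta * (SpE - Spe - (Sbt - TK)).
  rewrite E4 E5 in DS'.
  have : ln Z0 + Srr + beta * SqE - beta * (SpE - Spe - (Sbt - TK)) <= 0.
    have -> : ln Z0 + Srr + beta * SqE - beta * (SpE - Spe - (Sbt - TK)) =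
      (Srr - beta * TK - ln ZB - (- beta * SqE - ln Ztil + (- beta * Sbt - ln ZB))) +
      (- beta * SpE - ln Ztil - (- beta * Spe - ln Z0)) by ring.
    rewrite -[0](addr0 0); apply: lerD; by rewrite subr_le0.
  by rewrite subr_le0.
apply: (@le_trans _ _ (beta^-1 * (ln Z0 + Srr + beta * SqE))).
  by rewrite le_eqVlt; apply/orP; left; apply/eqP; ring.
rewrite -[X in _ <= X](mulKf (negbT (gt_eqF hbeta))).
apply: ler_wpM2l; last exact: key.
by rewrite invr_ge0 ltW.
Qed.
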